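(* Let $X$ be a compact metric countable space and $f:X\to X$ a continuous function such that every accumulation point of $X$ is a fixed point of $f$. For every accumulation point $a$ of $X$, the following are equivalent: (1) there is $p\in\mathbb N^*$ such that $f^p$ is discontinuous at $a$; (2) there are a periodic point $b\in X\setminus\{a\}$ and a sequence $(a_n)_{n\in\mathbb N}$ in $X$ such that $a_n\to a$ and $b\in\overline{\mathcal O_f(a_n)}$ for all $n\in\mathbb N$; (3) $f^p$ is discontinuous at $a$ for every $p\in\mathbb N^*$.
   Context: $\mathbb N^*$ denotes the set of free ultrafilters on $\mathbb N$. For $p\in\mathbb N^*$ and a sequence $(x_n)$ in $X$, $x=p\text{-}\lim_{n\to\infty}x_n$ means that for every neighborhood $V$ of $x$, $\{n\in\mathbb N: x_n\in V\}\in p$. The $p$-iterate of $f$ is the function $f^p:X\to X$, $f^p(x)=p\text{-}\lim_{n\to\infty}f^n(x)$. The orbit of $x$ is $\mathcal O_f(x)=\{f^n(x):n\in\mathbb N\}$. A point $x$ is periodic if $f^n(x)=x$ for some $n\ge1$. An accumulation point of $X$ is a non-isolated point. *)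

(* Defs.v *)
From HB Require Import structures.
From mathcomp Require Import all_boot all_order all_algebra.
From mathcomp Require Import all_classical all_reals all_analysis.
Set Implicit Arguments. Unset Strict Implicit. Unset Printing Implicit Defensive.
Import Order.TTheory GRing.Theory Num.Theory.
Local Open Scope classical_set_scope.

Definition free_ultrafilter (p : set_system nat) : Prop :=
  UltraFilter p /\ (forall A : set nat, finite_set A -> ~ p A).

Section PIterate.
Variable X : topologicalType.

Definition is_plim (p : set_system nat) (x : nat -> X) (l : X) : Prop :=
  forall V : set X, nbhs l V -> p [set n | V (x n)].

(* The p-iterate f^p(x) = p-lim f^n(x) (a chosen p-limit; it exists and is
   unique in a compact Hausdorff space; the default x is never used there). *)
Definition piterate (f : X -> X) (p : set_system nat) (x : X) : X :=
  xget x [set l | is_plim p (fun n => iter n f x) l].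

Definition forbit (f : X -> X) (x : X) : set X := [set iter n f x | n in [set: nat]].

Definition periodic_point (f : X -> X) (x : X) : Prop :=
  exists n, (0 < n)%N /\ iter n f x = x.

Definition accumulation_point (x : X) : Prop := limit_point [set: X] x.
End PIterate.

(* Main.v *)
Require Import Defs.
From HB Require Import structures.
From mathcomp Require Import all_boot all_order all_algebra.
From mathcomp Require Import all_classical all_reals all_analysis.
From Stdlib Require Classical_Prop.
From mathcomp.algebra_tactics Require Import ring lra.
Set Implicit Arguments. Unset Strict Implicit. Unset Printing Implicit Defensive.
Import Order.TTheory GRing.Theory Num.Theory.
Local Open Scope classical_set_scope.

Lemma seq_cluster (R : realType) (X : pseudoMetricType R) :
  compact [set: X] -> forall s : nat -> X, exists w : X,
  forall V, nbhs w V -> forall N, exists k, (N <= k)%N /\ V (s k).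
Proof.
move=> Hc s; have [w [_ Hw]] := Hc (s @ \oo) _ filterT.
exists w => V Vw N.
have : (s @ \oo) [set z | exists k, (N <= k)%N /\ z = s k].
  by exists N => // k /= Nk; exists k.
move=> /(Hw _ V) /(_ Vw) [z [[k [Nk ->]] Vs]]; by exists k.
Qed.

Lemma iter_cont (X : topologicalType) (f : X -> X) m :
  continuous f -> continuous (iter m f).
Proof.
move=> Hf; elim: m => [|m IH] x /=; first exact: cvg_id.
exact: (continuous_comp (IH x) (Hf _)).
Qed.

Lemma iter_fix (T : Type) (f : T -> T) a n : f a = a -> iter n f a = a.
Proof. by move=> fa; elim: n => //= n ->. Qed.

Lemma iter_per (T : Type) (f : T -> T) c N k : iter N f c = c -> iter (k * N) f c = c.
Proof. by move=> H; elim: k => // k IH; rewrite mulSn iterD IH H. Qed.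

Lemma iter_mod (T : Type) (f : T -> T) c N m : iter N f c = c ->
  iter m f c = iter (m %% N) f c.
Proof.
move=> H; rewrite {1}(divn_eq m N) addnC iterD iter_per //.
Qed.

Lemma iter_back (T : Type) (f : T -> T) c N m : (0 < N)%N -> iter N f c = c ->
  c = iter (N * m - m) f (iter m f c).
Proof.
move=> N0 H; rewrite -iterD subnK; last by rewrite leq_pmull.
by rewrite mulnC iter_per.
Qed.

Lemma per_ne (T : Type) (f : T -> T) a c N m : f a = a -> (0 < N)%N ->
  iter N f c = c -> c <> a -> iter m f c <> a.
Proof.
move=> fa N0 H ca E; apply: ca.
by rewrite (iter_back m N0 H) E iter_fix.
Qed.

Lemma ball_sep (R : realType) (X : pseudoMetricType R) (x y : X) :
  hausdorff_space X -> x <> y -> exists2 e : R, (0 < e)%R & ~ ball x e y.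
Proof.
move=> Hd xy; apply: Classical_Prop.NNPP => H; apply: xy; apply: Hd.
move=> A B /nbhs_ballP [e e0 eA] By; exists y; split; last exact: nbhs_singleton.
apply: eA; apply: Classical_Prop.NNPP => nb; apply: H; by exists e.
Qed.

Lemma finavoid (R : realType) (X : pseudoMetricType R) (z : X) (F : nat -> X) :
  hausdorff_space X -> (forall k, F k <> z) -> forall M,
  exists2 e : R, (0 < e)%R & forall k, (k < M)%N -> ~ ball z e (F k).
Proof.
move=> Hd HF; elim=> [|M [e1 e10 IH]]; first by exists 1%R.
have [e2 e20 H2] := ball_sep Hd (nesym (HF M)).
exists (Num.min e1 e2); first by rewrite lt_min e10 e20.
move=> k; rewrite ltnS leq_eqVlt => /orP [/eqP ->|kM] B.
  by apply: H2; apply: (le_ball _ B); rewrite ge_min lexx orbT.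
by apply: (IH k kM); apply: (le_ball _ B); rewrite ge_min lexx.
Qed.

Lemma isolated_pt (X : topologicalType) (w : X) :
  ~ accumulation_point w -> exists V, nbhs w V /\ forall y, V y -> y = w.
Proof.
move=> H; apply: Classical_Prop.NNPP => H2; apply: H => U HU.
apply: Classical_Prop.NNPP => H3; apply: H2; exists U; split=> // y Uy.
apply: Classical_Prop.NNPP => yw; apply: H3; exists y; split => //; exact/eqP.
Qed.

Lemma plim_exists (X : topologicalType) (p : set_system nat) (s : nat -> X) :
  UltraFilter p -> compact [set: X] -> exists l, is_plim p s l.
Proof.
move=> Up Hc.
have Us : UltraFilter (s @ p).
  split; first exact: fmap_proper_filter.
  move=> G PG sG; rewrite predeqE => A; split; last exact: sG.
  move=> GA; have [//|pn] := in_ultra_setVsetC (s @^-1` A) Up.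
  have GnA : G (~` A) by apply: sG.
  by have /filter_ex [? []] : G (A `&` (~` A)) by exact: filterI.
move: Hc; rewrite compact_ultra => /(_ _ Us filterT) [l [_ Hl]].
by exists l.
Qed.

Lemma plim_unique (X : topologicalType) (p : set_system nat) (s : nat -> X) l1 l2 :
  hausdorff_space X -> ProperFilter p -> is_plim p s l1 -> is_plim p s l2 -> l1 = l2.
Proof. by move=> Hd Pp H1 H2; apply: (cvg_unique Hd (F := s @ p)). Qed.

Lemma piterateP (X : topologicalType) (f : X -> X) (p : set_system nat) x :
  UltraFilter p -> compact [set: X] -> is_plim p (fun n => iter n f x) (piterate f p x).
Proof. by move=> Up Hc; apply: xgetPex; apply: plim_exists. Qed.

Lemma pcl (X : topologicalType) (p : set_system nat) (s : nat -> X) l :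
  ProperFilter p -> is_plim p s l -> closure (range s) l.
Proof.
move=> Pp H B Bl; have [n /= Bn] := filter_ex (H _ Bl).
by exists (s n); split => //; exists n.
Qed.

Lemma plim_comp (X : topologicalType) (p : set_system nat) (s : nat -> X) l (g : X -> X) :
  is_plim p s l -> {for l, continuous g} -> is_plim p (g \o s) (g l).
Proof. by move=> H Hg V Vg; apply: (H _ (Hg _ Vg)). Qed.

Lemma pcomm (X : topologicalType) (f : X -> X) (p : set_system nat) x m :
  hausdorff_space X -> compact [set: X] -> continuous f -> UltraFilter p ->
  piterate f p (iter m f x) = iter m f (piterate f p x).
Proof.
move=> Hd Hc Hf Up.
apply: (plim_unique (s := fun n => iter n f (iter m f x)) Hd (@ultra_proper _ _ Up)).
  by apply: piterateP.
have E : (iter m f \o (fun n => iter n f x)) = (fun n => iter n f (iter m f x)).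
  by apply: funext => n /=; rewrite -!iterD addnC.
rewrite -E; apply: plim_comp; first by apply: piterateP.
exact: iter_cont.
Qed.

Lemma pfix (X : topologicalType) (f : X -> X) (p : set_system nat) a :
  hausdorff_space X -> compact [set: X] -> UltraFilter p -> f a = a ->
  piterate f p a = a.
Proof.
move=> Hd Hc Up fa.
apply: (plim_unique (s := fun n => iter n f a) Hd (@ultra_proper _ _ Up)); first by apply: piterateP.
move=> V Va; apply: filterS filterT => n _ /=; rewrite iter_fix //.
exact: nbhs_singleton.
Qed.

Lemma pper (X : topologicalType) (f : X -> X) (p : set_system nat) x :
  compact [set: X] -> (forall y : X, accumulation_point y -> f y = y) ->
  free_ultrafilter p -> periodic_point f (piterate f p x).
Proof.
move=> Hc Hfix [Up Hfr].
set c := piterate f p x.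
have [acc|nacc] := Classical_Prop.classic (accumulation_point c).
  by exists 1%N; split => //=; rewrite Hfix.
have [V [Vc HV]] := isolated_pt nacc.
have pS : p [set n | iter n f x = c].
  by have := @piterateP _ f p x Up Hc V Vc; apply: filterS => n /HV.
have [n1 /= E1] : exists n, iter n f x = c.
  apply: Classical_Prop.NNPP => H; apply: (Hfr set0); first exact: finite_set0.
  by apply: filterS pS => n /= E; apply: H; exists n.
have [n2 [/= E2 n21]] : exists n, iter n f x = c /\ n <> n1.
  apply: Classical_Prop.NNPP => H; apply: (Hfr [set n1]); first exact: finite_set1.
  apply: filterS pS => n /= E; apply: Classical_Prop.NNPP => nn; apply: H.
  by exists n.
have key : forall i j, (i < j)%N -> iter i f x = c -> iter j f x = c -> periodic_point f c.
  move=> i j ij Ei Ej; exists (j - i)%N; split; first by rewrite subn_gt0.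
  by rewrite -{1}Ei -iterD subnK ?Ej // ltnW.
case: (ltngtP n1 n2) => [h|h|h]; first exact: (key _ _ h E1 E2).
  exact: (key _ _ h E2 E1).
by case: n21.
Qed.

Lemma free_exists : exists p : set_system nat, free_ultrafilter p.
Proof.
have [G [UG sG]] := ultraFilterLemma (eventually_filter).
exists G; split => // A /finite_fsetP [s ->] GA.
set N := (\max_(x <- finmap.enum_fset s) x).+1.
have : G [set n | (N <= n)%N] by apply: sG; exists N.
move=> /(filterI GA) /filter_ex [n [/= ns Nn]].
have : (n <= \max_(x <- finmap.enum_fset s) x)%N by apply: (@leq_bigmax_seq _ _ xpredT id n).

by rewrite leqNgt Nn.
Qed.
Lemma natSinv (R : realType) (e : R) : (0 < e)%R ->
  exists N, forall n, (N <= n)%N -> (n.+1%:R^-1 < e)%R.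
Proof.
move=> e0; have [N _ HN] := nbhs_infty_gtr e^-1.
exists N => n Nn; have h := HN n Nn.
rewrite -[e]invrK ltf_pV2 ?posrE ?invr_gt0 ?ltr0n //.
by apply: (lt_trans h); rewrite ltr_nat.
Qed.

Lemma interval_uncountable (R : realType) (B : set R) (rho : R) :
  (0 < rho)%R -> countable B -> exists r : R, [/\ (0 < r)%R, (r < rho)%R & ~ B r].
Proof.
move=> r0 cB; apply: Classical_Prop.NNPP => H.
have sub : [set` (Interval (BRight 0%R) (BLeft rho))] `<=` B.
  move=> r /=; rewrite in_itv /= => /andP [h1 h2].
  by apply: Classical_Prop.NNPP => nB; apply: H; exists r.
have := countable_lebesgue_measure0 (sub_countable (subset_card_le sub) cB).
rewrite lebesgue_measure_itv /= lte_fin r0 oppr0 adde0 => -[] /eqP.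
by rewrite gt_eqF.
Qed.

Lemma gap (R : realType) (X : pseudoMetricType R) (a : X) (rho : R) :
  countable [set: X] -> compact [set: X] -> (0 < rho)%R ->
  exists r d : R, [/\ (0 < d)%R, (d < r)%R, (r < rho)%R &
    forall y, ball a (r + d)%R y -> ball a (r - d)%R y].
Proof.
move=> Hcnt Hc r0.
pose bad (r : R) (y : X) := forall e : R, (0 < e)%R -> ball a (r + e)%R y /\ ~ ball a (r - e)%R y.
have buniq : forall r1 r2 y, bad r1 y -> bad r2 y -> r1 = r2.
  have H : forall r1 r2 y, bad r1 y -> bad r2 y -> ~ (r1 < r2)%R.
    move=> r1 r2 y b1 b2 lt12.
    have e0 : (0 < (r2 - r1) / 2)%R by rewrite divr_gt0 // subr_gt0.
    have [B1 _] := b1 _ e0; have [_ B2] := b2 _ e0; apply: B2.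
    suff -> : (r2 - (r2 - r1) / 2 = r1 + (r2 - r1) / 2)%R by [].
    by field.
  move=> r1 r2 y b1 b2; case: (ltgtP r1 r2) => // h.
    by case: (H _ _ _ b1 b2 h).
  by case: (H _ _ _ b2 b1 h).
pose phi (y : X) := xget 0%R [set r | bad r y].
have cB : countable [set r | exists y, bad r y].
  apply: (sub_countable (B := phi @` [set: X])); last first.
    exact: (sub_countable (card_image_le _ _) Hcnt).
  apply: subset_card_le => r [y by_]; exists y => //.
  apply: (buniq _ _ y _ by_); apply: (@xgetPex _ 0%R [set r | bad r y]); by exists r.
have [r [rp rrho nB]] := interval_uncountable r0 cB.
have good : forall y, exists2 e : R, (0 < e)%R &
    (ball a (r + e)%R y -> ball a (r - e)%R y).
  move=> y; apply: Classical_Prop.NNPP => H; apply: nB; exists y => e e0.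
  split; apply: Classical_Prop.NNPP => H2; apply: H; exists e => //.
  by move=> B; apply: Classical_Prop.NNPP => H3; apply: H2.
have [d d0 Hd] : exists2 d : R, (0 < d)%R &
    forall y, ball a (r + d)%R y -> ball a (r - d)%R y.
  apply: Classical_Prop.NNPP => H.
  have Hs : forall k : nat, exists y, ball a (r + k.+1%:R^-1)%R y /\ ~ ball a (r - k.+1%:R^-1)%R y.
    move=> k; apply: Classical_Prop.NNPP => H1; apply: H.
    exists (k.+1%:R^-1)%R; first by rewrite invr_gt0 ltr0n.
    move=> y B; apply: Classical_Prop.NNPP => nb; apply: H1; by exists y.
  case: (choice Hs) => s Hs'.
  have [w Hw] := seq_cluster Hc s.
  have [e e0 He] := good w.
  have e30 : (0 < e / 3)%R by rewrite divr_gt0.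
  have [N HN] := natSinv e30.
  have [k [Nk Bk]] := Hw _ (nbhsx_ballx w _ e30) N.
  have Hk := HN k Nk.
  have [B1 nB1] := Hs' k; move: Hk B1 nB1; set x := (k.+1%:R^-1)%R => Hk B1 nB1.
  apply: nB1.
  have B2 : ball a (r + e)%R w.
    apply: (le_ball _ (ball_triangle B1 (ball_sym Bk))); lra.
  apply: (le_ball _ (ball_triangle (He B2) Bk)); lra.
exists r, (Num.min d (r / 2))%R; split.
- by rewrite lt_min d0 divr_gt0.
- apply: (le_lt_trans (y := (r / 2)%R)); first by rewrite ge_min lexx orbT.
  lra.
- exact: rrho.
- move=> y B.
  have B' : ball a (r + d)%R y by apply: (le_ball _ B); rewrite lerD2l ge_min lexx.
  apply: (le_ball _ (Hd _ B')); rewrite lerD2l lerN2 ge_min lexx //.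
Qed.

Lemma cluster_D (R : realType) (X : pseudoMetricType R) (f : X -> X) (d : R)
    (s : nat -> X) :
  compact [set: X] -> continuous f ->
  (forall y : X, accumulation_point y -> f y = y) -> (0 < d)%R ->
  (forall k, ~ ball (s k) d (f (s k))) ->
  exists w, forall N, exists k, (N <= k)%N /\ s k = w.
Proof.
move=> Hc Hf Hfix d0 Hs.
have [w Hw] := seq_cluster Hc s.
have nb : ~ ball w (d / 2)%R (f w).
  move=> B.
  have d40 : (0 < d / 4)%R by rewrite divr_gt0.
  have nV : nbhs w (ball w (d / 4)%R `&` f @^-1` ball (f w) (d / 4)%R).
    apply: filterI; first exact: nbhsx_ballx.
    exact: (Hf w _ (nbhsx_ballx (f w) _ d40)).
  have [k [_ [B1 B2]]] := Hw _ nV 0%N.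
  apply: (Hs k).
  apply: (le_ball _ (ball_triangle (ball_triangle (ball_sym B1) B) B2)); lra.
have fw : f w <> w.
  by move=> E; apply: nb; rewrite E; apply: ballxx; rewrite divr_gt0.
have nacc : ~ accumulation_point w by move=> /Hfix.
have [V [Vw HV]] := isolated_pt nacc.
exists w => N; have [k [Nk Vk]] := Hw _ Vw N; exists k; split => //; exact: HV.
Qed.

Lemma exit_lemma (P : nat -> Prop) n0 m : P n0 -> ~ P m -> (n0 <= m)%N ->
  exists n, [/\ (n0 <= n)%N, P n & ~ P n.+1].
Proof.
move=> Pn0 nPm; elim: m nPm => [|m IH] nPm.
  by rewrite leqn0 => /eqP E; rewrite E in Pn0.
rewrite leq_eqVlt => /orP [/eqP E|]; first by rewrite E in Pn0.
rewrite ltnS => n0m.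
have [Pm|nPm'] := Classical_Prop.classic (P m); first by exists m.
exact: IH.
Qed.

Lemma cl_img (X : topologicalType) (h : X -> X) (A : set X) z :
  continuous h -> closure A z -> closure (h @` A) (h z).
Proof.
move=> Hh Hz B Bh; have [y [Ay By]] := Hz _ (Hh z _ Bh).
by exists (h y); split => //; exists y.
Qed.

Lemma cl_per (R : realType) (X : pseudoMetricType R) (f : X -> X) w D z :
  hausdorff_space X -> (0 < D)%N -> iter D f w = w ->
  closure (forbit f w) z -> exists k, z = iter k f w.
Proof.
move=> Hd D0 HD Hz; apply: Classical_Prop.NNPP => H.
have [e e0 He] := finavoid (F := fun k => iter k f w) (z := z) Hd
  (fun k E => H (ex_intro _ k (esym E))) D.
have [y [[m _ <-] By]] := Hz _ (nbhsx_ballx z _ e0).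
apply: (He (m %% D)%N); first exact: ltn_pmod.
by rewrite -(iter_mod m HD).
Qed.

Lemma dir23 (R : realType) (X : pseudoMetricType R) (f : X -> X) :
  hausdorff_space X -> compact [set: X] -> countable [set: X] ->
  continuous f -> (forall x : X, accumulation_point x -> f x = x) ->
  forall a : X, f a = a ->
  forall b, periodic_point f b -> b <> a ->
  forall u : nat -> X, u @ \oo --> a ->
  (forall n, closure (forbit f (u n)) b) ->
  forall p, free_ultrafilter p -> ~ {for a, continuous (piterate f p)}.
Proof.
move=> Hd Hc Hcnt Hf Hfix a fa b [N0 [N00 HN0]] ba u Hu Hcl p Hp Hg.
have [Up Hfr] := Hp.
set g := piterate f p in Hg.
have ga : g a = a by apply: pfix.
have [rho rho0 Hrho] := finavoid (F := fun k => iter k f b) (z := a) Hd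
  (fun k => @per_ne _ f a b N0 k fa N00 HN0 ba) N0.
have [r [d [d0 dr rrho Hgap]]] := gap a Hcnt Hc rho0.
have Ustep : forall y z, ball a r y -> ball y d z -> ball a r z.
  move=> y z B1 B2; apply: (le_ball _ (Hgap _ (ball_triangle B1 B2))).
  by rewrite gerDl oppr_le0 ltW.
have Ustep' : forall y z, ~ ball a r y -> ball y d z -> ~ ball a r z.
  by move=> y z nB B1 B2; apply: nB; apply: (Ustep _ _ B2 (ball_sym B1)).
have nUb : forall k, ~ ball a r (iter k f b).
  move=> k B; apply: (Hrho (k %% N0)%N); first exact: ltn_pmod.
  by rewrite -(iter_mod k HN0); apply: (le_ball _ B); rewrite ltW.
have gu : (g \o u) @ \oo --> g a := cvg_comp _ _ Hu Hg.
move/cvg_ballP: gu => /(_ r) []; first by apply: (lt_trans d0).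
rewrite ga => n0 _ /(_ n0 (leqnn n0)) /= Bc.
set x := u n0 in Bc.
have P1 : forall M, exists n, (M <= n)%N /\ ball a r (iter n f x).
  move=> M; apply: Classical_Prop.NNPP => H; apply: (Hfr `I_M); first exact: finite_II.
  have Un : nbhs (g x) (ball a r).
    by apply: (filterS _ (nbhsx_ballx (g x) _ d0)) => z Bz; apply: (Ustep _ _ Bc Bz).
  have pU := @piterateP _ f p x Up Hc _ Un.
  apply: filterS pU => n /= Bn; rewrite ltnNge; apply/negP => Mn.
  by apply: H; exists n.
have P2 : forall M, exists n, (M <= n)%N /\ ~ ball a r (iter n f x).
  move=> M; apply: Classical_Prop.NNPP => H.
  have H' : forall n, (M <= n)%N -> ball a r (iter n f x).
    move=> n Mn; apply: Classical_Prop.NNPP => nB; apply: H; by exists n.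
  set j := (N0 * M)%N.
  have Ej : iter j f b = b by rewrite /j mulnC iter_per.
  have := cl_img (@iter_cont _ f j Hf) (Hcl n0).
  rewrite Ej => /(_ _ (nbhsx_ballx b _ d0)) [y [[z [m _ <-] <-] By]].
  apply: (Ustep' _ _ (nUb 0%N) By).
  rewrite -iterD; apply: H'; rewrite /j (leq_trans (leq_pmull M N00)) //.
  exact: leq_addr.
have Hexit : forall k, exists n, [/\ (k <= n)%N, ball a r (iter n f x)
    & ~ ball a r (iter n.+1 f x)].
  move=> k; have [n0' [kn0 Bn0]] := P1 k; have [m [n0m nBm]] := P2 n0'.
  have [n [n0n Pn nPn]] := exit_lemma (P := fun n => ball a r (iter n f x)) Bn0 nBm n0m.
  by exists n; split => //; apply: leq_trans n0n.
case: (choice Hexit) => h Hh.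
have Hs : forall k, ~ ball (iter (h k) f x) d (f (iter (h k) f x)).
  by move=> k B; have [_ B1 nB2] := Hh k; apply: nB2; apply: Ustep B.
have [w Hw] := cluster_D Hc Hf Hfix d0 Hs.
have [k1 [_ E1]] := Hw 0%N.
have [k2 [k2h E2]] := Hw (h k1).+1.
have [hk2 _ _] := Hh k2.
set i := h k1 in E1 k2h; set j := h k2 in E2 hk2.
have ij : (i < j)%N by apply: leq_trans k2h hk2.
have D0 : (0 < j - i)%N by rewrite subn_gt0.
have HD : iter (j - i) f w = w by rewrite -{1}E1 -iterD subnK ?E2 // ltnW.
have [kb Eb] : exists k, b = iter k f w.
  apply: (cl_per Hd D0 HD).
  set J := (N0 * i)%N.
  have EJ : iter J f b = b by rewrite /J mulnC iter_per.
  rewrite -EJ; apply: (closure_subset _ (cl_img (@iter_cont _ f J Hf) (Hcl n0))).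
  move=> _ [_ [m _ <-] <-]; exists (J + m - i)%N => //.
  rewrite -E1 -!iterD subnK //.
  apply: leq_trans (leq_addr m _); exact: leq_pmull.
have [kc Ec] : exists k, g w = iter k f w.
  apply: (cl_per Hd D0 HD); apply: pcl; first exact: ultra_proper.
  by apply: piterateP.
have gwc : g w = iter i f (g x) by rewrite -E1; apply: pcomm.
have [N1 [N10 HN1]] : periodic_point f (g x) by apply: pper.
have Ec2 : g x = iter ((N1 * i - i) + (kc + ((j - i) * kb - kb))) f b.
  rewrite (iter_back i N10 HN1) -gwc Ec iterD; congr (iter _ f _).
  by rewrite iterD Eb -(iter_back kb D0 HD).
by apply: (nUb ((N1 * i - i) + (kc + ((j - i) * kb - kb)))); rewrite -Ec2.
Qed.

Lemma dir12 (R : realType) (X : pseudoMetricType R) (f : X -> X) :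
  hausdorff_space X -> compact [set: X] -> countable [set: X] ->
  continuous f -> (forall x : X, accumulation_point x -> f x = x) ->
  forall a : X, f a = a ->
  forall p, free_ultrafilter p -> ~ {for a, continuous (piterate f p)} ->
  exists b : X, periodic_point f b /\ b <> a /\
          exists u : nat -> X, u @ \oo --> a /\
            forall n, closure (forbit f (u n)) b.
Proof.
move=> Hd Hc Hcnt Hf Hfix a fa p Hp Hdisc.
have [Up Hfr] := Hp.
set g := piterate f p in Hdisc *.
have ga : g a = a by apply: pfix.
have [eps eps0 Heps] : exists2 eps : R, (0 < eps)%R & forall eta : R, (0 < eta)%R ->
    exists x, ball a eta x /\ ~ ball a eps (g x).
  apply: Classical_Prop.NNPP => H; apply: Hdisc; apply/cvg_ballP => e e0.
  rewrite ga; apply/nbhs_ballP.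
  apply: Classical_Prop.NNPP => H1; apply: H; exists e => // eta eta0.
  apply: Classical_Prop.NNPP => H2; apply: H1; exists eta => // x Bx.
  apply: Classical_Prop.NNPP => nB; apply: H2; by exists x.
have [r [d [d0 dr reps Hgap]]] := gap a Hcnt Hc eps0.
have r0 : (0 < r)%R by apply: lt_trans dr.
have Ustep : forall y z, ball a r y -> ball y d z -> ball a r z.
  move=> y z B1 B2; apply: (le_ball _ (Hgap _ (ball_triangle B1 B2))).
  by rewrite gerDl oppr_le0 ltW.
have Ustep' : forall y z, ~ ball a r y -> ball y d z -> ~ ball a r z.
  by move=> y z nB B1 B2; apply: nB; apply: (Ustep _ _ B2 (ball_sym B1)).
have Hx : forall k : nat, exists x, ball a (Num.min r (k.+1%:R^-1))%R x /\ ~ ball a eps (g x).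
  by move=> k; apply: Heps; rewrite lt_min r0 invr_gt0 ltr0n.
case: (choice Hx) => x Hx'.
have Hn : forall k, exists n, [/\ (0 <= n)%N, ball a r (iter n f (x k))
    & ~ ball a r (iter n.+1 f (x k))].
  move=> k; have [B0 nBg] := Hx' k.
  have nBg' : ~ ball a r (g (x k)) by move=> B; apply: nBg; apply: (le_ball _ B); rewrite ltW.
  have := @pcl _ p _ _ (@ultra_proper _ _ Up) (@piterateP _ f p (x k) Up Hc).
  move=> /(_ _ (nbhsx_ballx (g (x k)) _ d0)) [y [[m _ <-] By]].
  apply: (exit_lemma (P := fun n => ball a r (iter n f (x k))) (m := m)) => //.
    by apply: (le_ball _ B0); rewrite ge_min lexx.
  exact: (Ustep' _ _ nBg' By).
case: (choice Hn) => nn Hnn.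
have Hs : forall k, ~ ball (iter (nn k) f (x k)) d (f (iter (nn k) f (x k))).
  by move=> k B; have [_ B1 nB2] := Hnn k; apply: nB2; apply: Ustep B.
have [w Hw] := cluster_D Hc Hf Hfix d0 Hs.
case: (choice Hw) => kk Hkk.
exists (g w); split; first by apply: pper.
split.
  have [_ E] := Hkk 0%N.
  have [N1 [N10 HN1]] : periodic_point f (g (x (kk 0%N))) by apply: pper.
  have [_ nB] := Hx' (kk 0%N).
  rewrite -E /g pcomm //; apply: (@per_ne _ f a _ N1 _ fa N10 HN1).
  by move=> E2; apply: nB; rewrite E2; apply: ballxx.
exists (fun N => x (kk N)); split.
  apply/cvg_ballP => e e0.
  have [N HN] := natSinv e0.
  exists N => // n /= Nn.
  have [kkn _] := Hkk n; have [B _] := Hx' (kk n).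
  apply: (le_ball _ B); rewrite ge_min; apply/orP; right; apply: ltW.
  by apply: HN; apply: leq_trans Nn kkn.
move=> N; have [_ E] := Hkk N.
apply: (closure_subset _ (pcl (@ultra_proper _ _ Up) (@piterateP _ f p w Up Hc))).
move=> _ [m _ <-]; exists (m + nn (kk N))%N => //.
by rewrite iterD E.
Qed.

Unset Implicit Arguments.
Set Strict Implicit.

Theorem theorem3p5 (R : realType) (X : pseudoMetricType R) (f : X -> X) :
  hausdorff_space X -> compact [set: X] -> countable [set: X] ->
  continuous f ->
  (forall x : X, accumulation_point x -> f x = x) ->
  forall a : X, accumulation_point a ->
  [<-> (exists p, free_ultrafilter p /\ ~ {for a, continuous (piterate f p)});
       (exists b : X, periodic_point f b /\ b <> a /\
          exists u : nat -> X, u @ \oo --> a /\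
            forall n, closure (forbit f (u n)) b);
       (forall p, free_ultrafilter p -> ~ {for a, continuous (piterate f p)})].
Proof.
move=> Hd Hc Hcnt Hf Hfix a Ha.
have fa : f a = a := Hfix a Ha.
tfae.
- move=> [p [Hp Hdisc]]; exact: (dir12 Hd Hc Hcnt Hf Hfix fa Hp Hdisc).
- move=> [b [Pb [ba [u [Hu Hcl]]]]] p Hp.
  exact: (dir23 Hd Hc Hcnt Hf Hfix fa Pb ba Hu Hcl Hp).
- move=> H; have [p Hp] := free_exists; exists p; split => //; exact: H p Hp.
Qed.
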